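(* Let $T_0$ be a closed, symmetric operator with dense domain in a Hilbert space $\mathcal{H}$, and suppose $T_0$ has a self-adjoint extension $T$ (with domain in $\mathcal{H}$) that has a bounded inverse $T^{-1}$ defined on all of $\mathcal{H}$. Let $X := T(T - iI)^{-1} = (I - iT^{-1})^{-1}$. Then $X$ restricts to a bijection from $(\mathrm{Ran}\, T_0)^\perp$ onto $(\mathrm{Ran}(T_0 + iI))^\perp$. In particular, $n := \dim (\mathrm{Ran}\, T_0)^\perp = \dim(\mathrm{Ran}(T_0 + iI))^\perp$, and $T_0$ has equal deficiency indices $(n,n)$.
   Context: The deficiency indices of a closed symmetric operator $T_0$ are $(n_+,n_-)$ with $n_\pm = \dim(\mathrm{Ran}(T_0 \pm iI))^\perp \in \{0,1,2,\dots\}\cup\{+\infty\}$. *)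

(* Defs.v *)
(* Unbounded operators are pairs (D, A) of a domain predicate
   and a map, linear on D. *)
From HB Require Import structures.
From mathcomp Require Import all_boot all_order all_algebra.
From mathcomp Require Import reals.
From mathcomp.real_closed Require Import complex.
Import GRing.Theory Num.Theory.
Set Implicit Arguments.
Unset Strict Implicit.
Unset Printing Implicit Defensive.
Local Open Scope ring_scope.

Section Hilbert.
Variables (R : realType) (H : lmodType R[i]).

(* inner product, linear in the first argument, conjugate-linear in the second *)
Definition is_inner (ip : H -> H -> R[i]) : Prop :=
  [/\ (forall (a : R[i]) x y z, ip (a *: x + y) z = a * ip x z + ip y z),
      (forall x y, ip y x = conjc (ip x y)),
      (forall x, 0 <= ip x x) &
      (forall x, ip x x = 0 -> x = 0)].

Definition nrm (ip : H -> H -> R[i]) (x : H) : R := Num.sqrt (complex.Re (ip x x)).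

Definition cvg_to (ip : H -> H -> R[i]) (u : nat -> H) (x : H) : Prop :=
  forall e : R, 0 < e -> exists N, forall n, (N <= n)%N -> nrm ip (u n - x) < e.

Definition cauchy_seq (ip : H -> H -> R[i]) (u : nat -> H) : Prop :=
  forall e : R, 0 < e -> exists N, forall m n, (N <= m)%N -> (N <= n)%N ->
    nrm ip (u m - u n) < e.

Definition is_hilbert (ip : H -> H -> R[i]) : Prop :=
  is_inner ip /\ forall u, cauchy_seq ip u -> exists x, cvg_to ip u x.

Definition is_op (D : H -> Prop) (A : H -> H) : Prop :=
  [/\ D 0,
      (forall x y, D x -> D y -> D (x + y)),
      (forall (a : R[i]) x, D x -> D (a *: x)),
      (forall x y, D x -> D y -> A (x + y) = A x + A y) &
      (forall (a : R[i]) x, D x -> A (a *: x) = a *: A x)].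

Definition dense (ip : H -> H -> R[i]) (D : H -> Prop) : Prop :=
  forall x (e : R), 0 < e -> exists y, D y /\ nrm ip (x - y) < e.

Definition closed_op (ip : H -> H -> R[i]) (D : H -> Prop) (A : H -> H) : Prop :=
  forall (u : nat -> H) x y, (forall n, D (u n)) ->
    cvg_to ip u x -> cvg_to ip (fun n => A (u n)) y -> D x /\ A x = y.

Definition symmetric_op (ip : H -> H -> R[i]) (D : H -> Prop) (A : H -> H) : Prop :=
  forall x y, D x -> D y -> ip (A x) y = ip x (A y).

Definition adj_dom (ip : H -> H -> R[i]) (D : H -> Prop) (A : H -> H) (y : H) : Prop :=
  exists z, forall x, D x -> ip (A x) y = ip x z.

(* self-adjoint: densely defined, Dom(adj A) = Dom(A), and adj A = A on it
   (adj A y is the unique z above, by density; it equals A y iff A is symmetric) *)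
Definition self_adjoint (ip : H -> H -> R[i]) (D : H -> Prop) (A : H -> H) : Prop :=
  [/\ is_op D A, dense ip D,
      (forall y, D y <-> adj_dom ip D A y) &
      symmetric_op ip D A].

Definition extends (D0 : H -> Prop) (A0 : H -> H) (D : H -> Prop) (A : H -> H) : Prop :=
  forall x, D0 x -> D x /\ A x = A0 x.

Definition bounded_inverse (ip : H -> H -> R[i]) (D : H -> Prop) (A : H -> H)
    (Tinv : H -> H) : Prop :=
  [/\ (forall (a : R[i]) x y, Tinv (a *: x + y) = a *: Tinv x + Tinv y),
      (exists M : R, forall x, nrm ip (Tinv x) <= M * nrm ip x),
      (forall x, D (Tinv x) /\ A (Tinv x) = x) &
      (forall x, D x -> Tinv (A x) = x)].

Definition ran_shift (D : H -> Prop) (A : H -> H) (c : R[i]) (z : H) : Prop :=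
  exists x, D x /\ z = A x + c *: x.

Definition ran (D : H -> Prop) (A : H -> H) (z : H) : Prop :=
  exists x, D x /\ z = A x.

Definition perp (ip : H -> H -> R[i]) (S : H -> Prop) (y : H) : Prop :=
  forall x, S x -> ip x y = 0.

Definition has_indep (S : H -> Prop) (k : nat) : Prop :=
  exists v : 'I_k -> H, (forall j, S (v j)) /\
    forall c : 'I_k -> R[i], \sum_(j < k) c j *: v j = 0 -> forall j, c j = 0.

End Hilbert.

Definition iC (R : realType) : R[i] := Complex 0 1.

Inductive extnat := Fin of nat | Infty.

Definition dim_is (R : realType) (H : lmodType R[i]) (S : H -> Prop) (d : extnat) : Prop :=
  match d with
  | Fin n => has_indep S n /\ ~ has_indep S n.+1
  | Infty => forall k, has_indep S k
  end.

Definition deficiency_indices (R : realType) (H : lmodType R[i]) (ip : H -> H -> R[i])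
    (D : H -> Prop) (A : H -> H) (np nm : extnat) : Prop :=
  dim_is (perp ip (ran_shift D A (iC R))) np /\ dim_is (perp ip (ran_shift D A (- iC R))) nm.

(* Main.v *)
Require Import Defs.
From HB Require Import structures.
From mathcomp Require Import all_boot all_order all_algebra.
From mathcomp Require Import reals.
From mathcomp.real_closed Require Import complex.
From mathcomp.algebra_tactics Require Import ring lra.
Import Order.TTheory GRing.Theory Num.Theory.
Local Open Scope ring_scope.
From Stdlib Require Import ClassicalEpsilon Classical.
Set Implicit Arguments.
Unset Strict Implicit.
Unset Printing Implicit Defensive.

Section Basics.
Variables (R : realType) (H : lmodType R[i]) (ip : H -> H -> R[i]).
Hypothesis hip : is_inner ip.

Lemma ipDl x y z : ip (x + y) z = ip x z + ip y z.
Proof. case: hip => h _ _ _. by rewrite -[x in LHS]scale1r h mul1r. Qed.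

Lemma ip0l z : ip 0 z = 0.
Proof.
have := ipDl 0 0 z; rewrite addr0 => h.
by apply: (@addrI _ (ip 0 z)); rewrite addr0 -h.
Qed.

Lemma ipZl a x z : ip (a *: x) z = a * ip x z.
Proof. case: hip => h _ _ _. by rewrite -[a *: x]addr0 h ip0l addr0. Qed.

Lemma ipNl x z : ip (- x) z = - ip x z.
Proof. by rewrite -scaleN1r ipZl mulN1r. Qed.

Lemma ipBl x y z : ip (x - y) z = ip x z - ip y z.
Proof. by rewrite ipDl ipNl. Qed.

Lemma ipC x y : ip y x = conjc (ip x y).
Proof. by case: hip. Qed.

Lemma ipDr x y z : ip z (x + y) = ip z x + ip z y.
Proof. by rewrite (ipC (x+y)) (ipC x z) (ipC y z) ipDl rmorphD. Qed.

Lemma ipZr a x z : ip z (a *: x) = conjc a * ip z x.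
Proof. by rewrite (ipC (a *: x)) (ipC x z) ipZl rmorphM. Qed.

Lemma ip0r z : ip z 0 = 0.
Proof. by rewrite (ipC 0) ip0l rmorph0. Qed.

Lemma ipNr x z : ip z (- x) = - ip z x.
Proof. by rewrite (ipC (- x)) (ipC x z) ipNl rmorphN. Qed.

Lemma ipBr x y z : ip z (x - y) = ip z x - ip z y.
Proof. by rewrite ipDr ipNr. Qed.

Definition N x := complex.Re (ip x x).

Lemma ip_real x : ip x x = real_complex R (N x).
Proof.
case: hip => _ _ h _; have := h x; rewrite lecE /N.
by case: (ip x x) => a b /= /andP [/eqP -> _].
Qed.

Lemma N_ge0 x : 0 <= N x.
Proof. case: hip => _ _ h _; have := h x; rewrite lecE /N => /andP [_]. by []. Qed.

Lemma N_eq0 x : N x = 0 -> x = 0.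
Proof. move=> h; case: hip => _ _ _; apply; by rewrite ip_real h. Qed.

Lemma nrm_ge0 x : 0 <= nrm ip x.
Proof. exact: sqrtr_ge0. Qed.

Lemma nrm_sqr x : nrm ip x ^+ 2 = N x.
Proof. by rewrite /nrm sqr_sqrtr // N_ge0. Qed.

Lemma nrm_eq0 x : nrm ip x = 0 -> x = 0.
Proof. move=> h; apply: N_eq0; by rewrite -nrm_sqr h expr0n. Qed.

Lemma ReC (z : R[i]) : complex.Re (conjc z) = complex.Re z.
Proof. by case: z. Qed.

Lemma N_comb (a b : R) x y :
  N (real_complex R a *: x + real_complex R b *: y) =
  a ^+ 2 * N x + 2 * a * b * complex.Re (ip x y) + b ^+ 2 * N y.
Proof.
rewrite /N ipDl !ipZl !ipDr !ipZr (ipC x y) !ip_real.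
case: (ip x y) => u v /=.
simpc; ring. Qed.

Lemma N_add x y : N (x + y) = N x + 2 * complex.Re (ip x y) + N y.
Proof.
rewrite /N ipDl !ipDr (ipC x y) !ip_real; case: (ip x y) => u v /=; ring.
Qed.

Lemma CS x y : complex.Re (ip x y) <= nrm ip x * nrm ip y.
Proof.
have [hx|hx] := eqVneq (N x) 0.
  by rewrite (N_eq0 hx) ip0l mulr_ge0 // nrm_ge0.
have hxp : 0 < N x by rewrite lt_def hx N_ge0.
set r := complex.Re (ip x y).
set t := r / N x.
have ht : t * N x = r by rewrite /t mulfVK.
have h0 := N_ge0 (real_complex R t *: x + real_complex R (-1) *: y).
rewrite N_comb in h0.
have h1 : 0 <= N x * (t ^+ 2 * N x + 2 * t * -1 * r + (-1) ^+ 2 * N y).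
  by rewrite mulr_ge0 // ltW.
have e : N x * (t ^+ 2 * N x + 2 * t * -1 * r + (-1) ^+ 2 * N y) =
   (t * N x) ^+ 2 - 2 * (t * N x) * r + N x * N y by ring.
rewrite e ht in h1.
have h2 : r ^+ 2 <= (nrm ip x * nrm ip y) ^+ 2.
  rewrite exprMn !nrm_sqr. lra.
have hp : 0 <= nrm ip x * nrm ip y by rewrite mulr_ge0 // nrm_ge0.
move: h2 hp; generalize (nrm ip x * nrm ip y) => p h2 hp.
rewrite leNgt; apply/negP => hlt.
have : p ^+ 2 < r ^+ 2 by rewrite ltr_pXn2r // ?nnegrE // ltW // (le_lt_trans hp hlt).
by rewrite ltNge h2.
Qed.

Lemma nrm_triangle x y : nrm ip (x + y) <= nrm ip x + nrm ip y.
Proof.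
have h : nrm ip (x + y) ^+ 2 <= (nrm ip x + nrm ip y) ^+ 2.
  rewrite nrm_sqr N_add sqrrD !nrm_sqr; have := CS x y; lra.
have hp : 0 <= nrm ip x + nrm ip y by rewrite addr_ge0 // nrm_ge0.
move: h hp; generalize (nrm ip x + nrm ip y) => p h2 hp.
by rewrite -(ler_pXn2r (n:=2)) // ?nnegrE // nrm_ge0.
Qed.

Lemma N_opp x : N (- x) = N x.
Proof. by rewrite /N ipNl ipNr opprK. Qed.

Lemma nrm_opp x : nrm ip (- x) = nrm ip x.
Proof. by rewrite /nrm -/(N (- x)) N_opp. Qed.

Lemma nrm_sym x y : nrm ip (x - y) = nrm ip (y - x).
Proof. by rewrite -nrm_opp opprB. Qed.


Variable S : H -> H.
Hypothesis hSlin : forall a x y, S (a *: x + y) = a *: S x + S y.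
Variable M : R.
Hypothesis hM : forall x, nrm ip (S x) <= M * nrm ip x.
Hypothesis hSsym : forall u v, ip (S u) v = ip u (S v).

Lemma S0 : S 0 = 0.
Proof.
have := hSlin 1 0 0; rewrite !scale1r !addr0 => h.
by apply: (@addrI _ (S 0)); rewrite addr0 -h.
Qed.

Lemma SD x y : S (x + y) = S x + S y.
Proof. by rewrite -{1}[x]scale1r hSlin scale1r. Qed.

Lemma SZ a x : S (a *: x) = a *: S x.
Proof. by rewrite -[a *: x]addr0 hSlin S0 addr0. Qed.

Lemma SN x : S (- x) = - S x.
Proof. by rewrite -scaleN1r SZ scaleN1r. Qed.

Lemma SB x y : S (x - y) = S x - S y.
Proof. by rewrite SD SN. Qed.

Lemma N_S y : N (S y) <= M ^+ 2 * N y.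
Proof.
have h := hM y; have h0 := nrm_ge0 (S y); rewrite -!nrm_sqr -exprMn.
by rewrite ler_pXn2r // ?nnegrE // (le_trans h0 h).
Qed.

Let m := M ^+ 2.
Let c := (1 + m)^-1.
Let q := m * c.
Let hm : 0 <= m. Proof. exact: sqr_ge0. Qed.
Let hc : 0 < c. Proof. by rewrite invr_gt0 ltr_pwDl. Qed.
Let hqc : q + c = 1.
Proof. by rewrite /q -{2}[c]mul1r -mulrDl addrC mulfV // gt_eqF // ltr_pwDl. Qed.
Let hq0 : 0 <= q. Proof. by rewrite mulr_ge0 // ltW. Qed.
Let hq1 : q < 1. Proof. by rewrite -hqc ltrDl. Qed.

Definition Bop x := real_complex R q *: x + real_complex R (- c) *: S (S x).

Lemma N_Bop x : N (Bop x) <= q ^+ 2 * N x.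
Proof.
rewrite /Bop N_comb -hSsym -/(N (S x)).
have h1 := N_S (S x); have h2 := N_ge0 (S x).
have h3 : c ^+ 2 * N (S (S x)) <= c * q * N (S x).
  have -> : c * q * N (S x) = c ^+ 2 * (m * N (S x)) by rewrite /q; ring.
  by rewrite ler_wpM2l // sqr_ge0.
have h4 : 0 <= c * q * N (S x) by apply: mulr_ge0 => //; apply: mulr_ge0 => //; exact: ltW.
have -> : (- c) ^+ 2 = c ^+ 2 by rewrite sqrrN.
have -> : 2 * q * - c * N (S x) = - 2 * (c * q * N (S x)) by ring.
move: h3 h4; set a := c ^+ 2 * N (S (S x)); set b := c * q * N (S x).
set d := q ^+ 2 * N x; move=> h3 h4.
lra.
Qed.


Lemma nrm_Bop x : nrm ip (Bop x) <= q * nrm ip x.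
Proof.
have h := N_Bop x; rewrite -!nrm_sqr -exprMn in h.
by rewrite -(ler_pXn2r (n:=2)) // ?nnegrE // ?nrm_ge0 // mulr_ge0 // nrm_ge0.
Qed.

Lemma Bop_B x y : Bop (x - y) = Bop x - Bop y.
Proof. by rewrite /Bop !SB !scalerBr opprD; apply/esym; rewrite addrACA. Qed.

Lemma Bop_eq x : Bop x = x - real_complex R c *: (x + S (S x)).
Proof.
rewrite /Bop; have -> : q = 1 - c by rewrite -hqc addrK.
by rewrite rmorphB rmorph1 rmorphN scalerBl scale1r scalerDr scaleNr opprD addrA.
Qed.

Lemma pow_bound (n : nat) : q ^+ n * (1 + n%:R * c) <= 1.
Proof.
have qE : q = 1 - c by rewrite -hqc addrK.
elim: n => [|n IH]; first by rewrite expr0 mul0r addr0 mul1r.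
rewrite exprS mulrSr.
have ha : 0 <= q ^+ n by rewrite exprn_ge0.
have hb : 0 <= n%:R :> R by rewrite ler0n.
have e : q * q ^+ n * (1 + (n%:R + 1) * c) =
   q ^+ n * (1 + n%:R * c) - q ^+ n * (c ^+ 2 * (n%:R + 1)) by rewrite qE; ring.
have h : 0 <= q ^+ n * (c ^+ 2 * (n%:R + 1)).
  by rewrite mulr_ge0 // mulr_ge0 // ?sqr_ge0 // addr_ge0.
rewrite e; lra.
Qed.


Lemma nrm0 : nrm ip 0 = 0.
Proof. by rewrite /nrm ip0l sqrtr0. Qed.

Hypothesis hcomp : forall u, cauchy_seq ip u -> exists x, cvg_to ip u x.

Lemma iterB n v : nrm ip (iter n Bop v) <= q ^+ n * nrm ip v.
Proof.
elim: n => [|n IH] /=; first by rewrite expr0 mul1r.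
apply: (le_trans (nrm_Bop _)); rewrite exprS -mulrA ler_wpM2l //.
Qed.

Lemma solve w : exists x, x + S (S x) = w.
Proof.
pose C := real_complex R c.
pose F v := Bop v + C *: w.
pose xs n := iter n F 0.
have xsS n : xs n.+1 = F (xs n) by [].
have FB u v : F u - F v = Bop (u - v).
  by rewrite /F opprD addrACA subrr addr0 Bop_B.
have diff n j : xs (n + j)%N - xs n = iter n Bop (xs j).
  elim: n j => [|n IH] j; first by rewrite add0n /= subr0.
  by rewrite addSn !xsS FB IH.
pose K := nrm ip (C *: w) / c.
have hK : K * c = nrm ip (C *: w) by rewrite /K mulfVK // gt_eqF.
have K0 : 0 <= K by rewrite /K divr_ge0 // ?nrm_ge0 // ltW.
have bnd n : nrm ip (xs n) <= K.
  elim: n => [|n IH]; first by rewrite /= nrm0.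
  rewrite xsS; apply: (le_trans (nrm_triangle _ _)).
  have := nrm_Bop (xs n).
  have h : q * nrm ip (xs n) <= q * K by rewrite ler_wpM2l.
  have e : q * K + nrm ip (C *: w) = K by rewrite -hK mulrC -mulrDr hqc mulr1.
  move: h e; set a := q * nrm ip (xs n); set b := q * K; move=> h e h'. lra.
have cau : cauchy_seq ip xs.
  move=> e he.
  pose y := 2 * (K + 1) / (e * c).
  have hy : 0 <= y by rewrite /y divr_ge0 // ?mulr_ge0 // ?addr_ge0 // ltW // mulr_gt0.
  have [N0 hN] : exists N0 : nat, y < N0%:R by exists (Num.Def.archi_bound y); exact: archi_boundP.
  have hN' : 2 * (K + 1) <= N0%:R * e * c.
    have : y * (e * c) <= N0%:R * (e * c) by rewrite ler_wpM2r // ?ltW // ?mulr_gt0.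
    by rewrite /y mulfVK ?mulrA // gt_eqF // mulr_gt0.
  have hqN : q ^+ N0 * (K + 1) < e.
    have hpb := pow_bound N0.
    have ha : 0 <= q ^+ N0 by rewrite exprn_ge0.
    have h1 : q ^+ N0 * (2 * (K + 1)) <= q ^+ N0 * (N0%:R * e * c) by rewrite ler_wpM2l.
    have h2 : e * (q ^+ N0 * (1 + N0%:R * c)) <= e * 1 by rewrite ler_wpM2l // ltW.
    have e1 : e * (q ^+ N0 * (1 + N0%:R * c)) = e * q ^+ N0 + q ^+ N0 * (N0%:R * e * c) by ring.
    have e2 : q ^+ N0 * (2 * (K + 1)) = 2 * (q ^+ N0 * (K + 1)) by ring.
    have h3 : 0 <= e * q ^+ N0 by rewrite mulr_ge0 // ltW.
    rewrite e1 in h2; rewrite e2 in h1.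
    move: h1 h2 h3; set a := q ^+ N0 * (K + 1); set b := q ^+ N0 * (N0%:R * e * c).
    set d := e * q ^+ N0; move=> h1 h2 h3; lra.
  have key i j : (N0 <= i)%N -> (i <= j)%N -> nrm ip (xs j - xs i) < e.
    move=> hi hij; rewrite -(subnKC hij) diff.
    apply: (le_lt_trans (iterB _ _)); apply: le_lt_trans hqN.
    have hqi : q ^+ i <= q ^+ N0 by apply: ler_wiXn2l => //; exact: ltW.
    apply: (le_trans (ler_wpM2l (exprn_ge0 _ hq0) (bnd _))).
    apply: (le_trans (ler_wpM2r K0 hqi)).
    by rewrite ler_wpM2l ?exprn_ge0 // lerDl.
  exists N0 => i j hi hj.
  case: (leqP i j) => hij; first by rewrite nrm_sym; apply: key.
  by apply: key => //; apply: ltnW.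
have [xl hxl] := hcomp cau.
pose v := xl - F xl.
have hv : forall e, 0 < e -> nrm ip v < 2 * e.
  move=> e he; have [N0 hN0] := hxl e he.
  have e1 : v = (xl - xs N0.+1) + Bop (xs N0 - xl).
    by rewrite -FB xsS /v addrA subrK.
  rewrite e1; apply: (le_lt_trans (nrm_triangle _ _)).
  have h1 : nrm ip (xl - xs N0.+1) < e by rewrite nrm_sym; apply: hN0.
  have h2 : nrm ip (xs N0 - xl) < e by apply: hN0.
  have h3 := nrm_Bop (xs N0 - xl).
  have h4 : q * nrm ip (xs N0 - xl) <= q * e by rewrite ler_wpM2l // ltW.
  move: h1 h3 h4; set a := nrm ip (xl - xs N0.+1); set b := nrm ip (Bop (xs N0 - xl)).
  set d := q * nrm ip (xs N0 - xl); set f := q * e; move=> h1 h3 h4.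
  have : f <= e by rewrite /f ger_pMl // ltW.
  lra.
have v0 : v = 0.
  apply: nrm_eq0; apply/eqP; rewrite eq_le nrm_ge0 andbT.
  rewrite leNgt; apply/negP => hpos.
  have := hv _ (divr_gt0 hpos (ltr0Sn _ 1)).
  by rewrite mulrC divfK ?ltxx // pnatr_eq0.
exists xl.
move: v0; rewrite /v /F Bop_eq opprD addrA opprB (addrC xl (_ - xl)) subrK -/C.
move/eqP; rewrite subr_eq0 => /eqP h.
have hC : C != 0 by rewrite /C; apply/eqP => /complexI /eqP; rewrite gt_eqF.
by rewrite -(scalerK hC (xl + _)) h scalerK.
Qed.

End Basics.

Section Gen.
Variables (R : realType) (H : lmodType R[i]) (ip : H -> H -> R[i]).
Hypothesis hip : is_inner ip.
Variable S : H -> H.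
Hypothesis hSlin : forall a x y, S (a *: x + y) = a *: S x + S y.
Hypothesis hSsym : forall u v, ip (S u) v = ip u (S v).
Hypothesis hsurj : forall w, exists x, x + S (S x) = w.
Variable s : R[i].
Hypothesis hss : s * s = -1.
Hypothesis hsc : conjc s = - s.

Definition L x := x - s *: S x.

Lemma L_lin a x y : L (a *: x + y) = a *: L x + L y.
Proof.
rewrite /L (hSlin a x y) scalerDr scalerA mulrC -scalerA scalerBr opprD addrACA.
done.
Qed.

Lemma L_B x y : L (x - y) = L x - L y.
Proof.
have -> : x - y = (-1) *: y + x by rewrite scaleN1r addrC.
by rewrite L_lin scaleN1r addrC.
Qed.

Lemma s_neq0 : s != 0.
Proof. apply/eqP => h; move: hss; rewrite h mul0r => /eqP; rewrite eq_sym oppr_eq0 oner_eq0. by []. Qed.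

Lemma L_inj0 x : L x = 0 -> x = 0.
Proof.
move/eqP; rewrite /L subr_eq0 => /eqP hx.
have e1 : ip x x = s * ip (S x) x by rewrite {1}hx ipZl.
have e2 : ip x x = - s * ip (S x) x by rewrite {2}hx (ipZr hip) hsc hSsym.
have : s * ip (S x) x = 0.
  have : (s * ip (S x) x) *+ 2 = 0 by rewrite mulr2n -{1}e1 e2 mulNr addNr.
  by move/eqP; rewrite mulrn_eq0 /= => /eqP.
move=> h0; case: hip => _ _ _; apply; by rewrite e1 h0.
Qed.

Lemma L_surj w : exists z, L z = w.
Proof.
have [x hx] := hsurj w; exists (x + s *: S x).
rewrite /L (SD hSlin) (SZ hSlin) scalerDr scalerA hss scaleN1r opprD opprK addrA addrK.
done.
Qed.

Definition Xs w := proj1_sig (constructive_indefinite_description _ (L_surj w)).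

Lemma XsK w : L (Xs w) = w.
Proof. exact: proj2_sig (constructive_indefinite_description _ (L_surj w)). Qed.

Lemma L_inj x y : L x = L y -> x = y.
Proof. move=> h; apply/eqP; rewrite -subr_eq0; apply/eqP/L_inj0; by rewrite L_B h subrr. Qed.

Lemma LK x : Xs (L x) = x.
Proof. by apply: L_inj; rewrite XsK. Qed.

Lemma Xs_lin a x y : Xs (a *: x + y) = a *: Xs x + Xs y.
Proof. by apply: L_inj; rewrite L_lin !XsK. Qed.

Lemma Xs_inj0 x : Xs x = 0 -> x = 0.
Proof.
move=> h; rewrite -(XsK x) h /L.
have -> : S 0 = 0 by exact: (S0 hSlin).
by rewrite scaler0 subr0.
Qed.

End Gen.

Lemma indep_transfer (R : realType) (H : lmodType R[i]) (A B : H -> Prop) (f : H -> H) :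
  (forall a x y, f (a *: x + y) = a *: f x + f y) -> (forall x, f x = 0 -> x = 0) ->
  (forall x, A x -> B (f x)) -> forall k, has_indep A k -> has_indep B k.
Proof.
move=> hl hi hm k [v [hv hind]]; exists (fun j => f (v j)); split => [j|cc hs].
  exact: hm.
have f0 : f 0 = 0.
  have := hl 1 0 0; rewrite !scale1r !addr0 => h.
  by apply: (@addrI _ (f 0)); rewrite addr0 -h.
have fD x y : f (x + y) = f x + f y by rewrite -{1}[x]scale1r hl scale1r.
have fZ a x : f (a *: x) = a *: f x by rewrite -[a *: x]addr0 hl f0 addr0.
apply: hind; apply: hi.
rewrite (big_morph f fD f0).
under eq_bigr do rewrite fZ.
exact: hs.
Qed.

Lemma indep0 (R : realType) (H : lmodType R[i]) (A : H -> Prop) : has_indep A 0.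
Proof. by exists (fun _ => 0); split => [[j hj]|c _ [j hj]]; exfalso; rewrite ltn0 in hj. Qed.

Lemma dim_exists (R : realType) (H : lmodType R[i]) (A : H -> Prop) : exists n, dim_is A n.
Proof.
case: (classic (forall k, has_indep A k)) => h; first by exists Infty.
have [k hk] : exists k, ~ has_indep A k by apply: not_all_ex_not.
elim: k hk => [|k IH] hk; first by case: hk; exact: indep0.
case: (classic (has_indep A k)) => hk'; first by exists (Fin k).
exact: IH.
Qed.

Lemma dim_transfer (R : realType) (H : lmodType R[i]) (A B : H -> Prop) n :
  (forall k, has_indep A k <-> has_indep B k) -> dim_is A n -> dim_is B n.
Proof.
move=> h; case: n => [n|] /=.
  by move=> [h1 h2]; split; [apply/h | move/h].
by move=> h1 k; apply/h.
Qed.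

Unset Implicit Arguments.

Theorem mainTheorem7 (R : realType) (H : lmodType R[i]) (ip : H -> H -> R[i])
    (D0 : H -> Prop) (T0 : H -> H) (D : H -> Prop) (T : H -> H) (Tinv : H -> H) :
  is_hilbert ip ->
  is_op D0 T0 -> dense ip D0 -> closed_op ip D0 T0 -> symmetric_op ip D0 T0 ->
  self_adjoint ip D T -> extends D0 T0 D T -> bounded_inverse ip D T Tinv ->
  exists X : H -> H,
    (* X = (I - i T^{-1})^{-1} *)
    (forall x, X (x - (iC R) *: Tinv x) = x /\ X x - (iC R) *: Tinv (X x) = x) /\
    (* X maps (Ran T0)^perp bijectively onto (Ran (T0 + iI))^perp *)
    (forall x, perp ip (ran D0 T0) x -> perp ip (ran_shift D0 T0 (iC R)) (X x)) /\
    (forall x y, perp ip (ran D0 T0) x -> perp ip (ran D0 T0) y -> X x = X y -> x = y) /\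
    (forall y, perp ip (ran_shift D0 T0 (iC R)) y ->
       exists x, perp ip (ran D0 T0) x /\ X x = y) /\
    (* dimensions and deficiency indices *)
    exists n : extnat,
      dim_is (perp ip (ran D0 T0)) n /\
      dim_is (perp ip (ran_shift D0 T0 (iC R))) n /\
      deficiency_indices ip D0 T0 n n.
Proof.
move=> [hip hcomp] hop0 hd0 hcl0 hsym0 [hopT hdT hadj hsymT] hext [hlin [M hM] hTS hST].
have Ssym : forall u v, ip (Tinv u) v = ip u (Tinv v).
  move=> u v; have [d1 e1] := hTS u; have [d2 e2] := hTS v.
  by rewrite -{1}e2 -(hsymT _ _ d1 d2) e1.
have hsurj := solve hip hlin hM Ssym hcomp.
have iiP : iC R * iC R = -1.
  by rewrite -expr2 /iC sqr_i.
have iiN : (- iC R) * (- iC R) = -1 by rewrite mulrNN.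
have cP : conjc (iC R) = - iC R.
  by rewrite /iC; simpc.
have cN : conjc (- iC R) = - - iC R.
  by rewrite /iC; simpc; rewrite /= opprK.
have key : forall s, conjc s = - s -> forall u y, D0 u ->
    ip (T0 u + s *: u) y = ip (T0 u) (y - s *: Tinv y).
  move=> s hsc u y hu; have [du eu] := hext u hu; have [dSy eSy] := hTS y.
  have h : ip (T0 u) (Tinv y) = ip u y by rewrite -eu (hsymT _ _ du dSy) eSy.
  by rewrite (ipDl hip) (ipZl hip) (ipBr hip) (ipZr hip) hsc h mulNr opprK.
have mapX : forall s (hss : s * s = -1), conjc s = - s -> forall x,
    perp ip (ran D0 T0) x -> perp ip (ran_shift D0 T0 s) (Xs hlin hsurj hss x).
  move=> s hss hsc x hx z [u [hu ->]].
  have hX := XsK hlin hsurj hss x; rewrite /L in hX.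
  rewrite key // hX; apply: hx; by exists u.
have mapL : forall s, conjc s = - s -> forall y,
    perp ip (ran_shift D0 T0 s) y -> perp ip (ran D0 T0) (L Tinv s y).
  move=> s hsc y hy z [u [hu ->]]; rewrite /L -key //; apply: hy; by exists u.
have dimeq : forall s (hss : s * s = -1), conjc s = - s -> forall k,
    has_indep (perp ip (ran D0 T0)) k <-> has_indep (perp ip (ran_shift D0 T0 s)) k.
  move=> s hss hsc k; split; apply: indep_transfer.
  - exact: (Xs_lin hip hlin Ssym hsurj hss hsc).
  - exact: Xs_inj0.
  - exact: mapX.
  - exact: (L_lin hlin s).
  - exact: (L_inj0 hip Ssym hsc).
  - exact: mapL.
have [n hn] := dim_exists (perp ip (ran D0 T0)).
exists (Xs hlin hsurj iiP).
split.
  move=> x; split; [exact: (LK hip hlin Ssym hsurj iiP cP x) | exact: XsK].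
split; first exact: mapX.
split.
  move=> x y _ _ h; by rewrite -(XsK hlin hsurj iiP x) h XsK.
split.
  move=> y hy; exists (L Tinv (iC R) y); split; first exact: mapL.
  exact: (LK hip hlin Ssym hsurj iiP cP y).
exists n; split; first done.
have h1 : dim_is (perp ip (ran_shift D0 T0 (iC R))) n by apply: dim_transfer hn; exact: dimeq.
split; first done.
split; first done.
by apply: dim_transfer hn; exact: dimeq.
Qed.
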